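(* Consider a nonempty configuration with largest nonempty level $\lambda$. Define $Y_\lambda=\sum_{r\ge0}SS_{\lambda-r}2^{-r+1-b}$, and for $r=0,1,\dots,b$ let $H_r=\lfloor SS_{\lambda-r}/2^b\rfloor$ and $E=\sum_{r=0}^b\lfloor H_r2^{-r+1}\rfloor$. Then $E\le Y_\lambda<E+b+7$, and $Y_\lambda\ge 1$.
   Context: Fix an integer $b\ge 2$. There is a set $\mathcal L$ of $N$ levels, which are consecutive integers. Each level $\ell$ holds a finite (possibly empty) multiset of normalized significands, each an integer in $[2^{b-1},2^b)$. Let $z$ be the total number of stored significands over all levels; assume $z<2^b$ (hence every $SS_\ell<2^{2b}$). For each level, $SS_\ell$ is the sum of its significands (so $SS_\ell=0$ iff the level is empty); set $SS_\ell=0$ for integers $\ell\notin\mathcal L$. The configuration is nonempty if $z\ge1$. *)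

(* Defs.v *)
From mathcomp Require Import all_boot all_order all_algebra.
Set Implicit Arguments. Unset Strict Implicit. Unset Printing Implicit Defensive.
Import Order.TTheory GRing.Theory Num.Theory.

(* A configuration assigns to each integer level l a finite multiset
   (represented as a list) of natural-number significands. *)
Definition SS (S : int -> seq nat) (l : int) : nat := sumn (S l).

Definition zcount (S : int -> seq nat) (lo : int) (N : nat) : nat :=
  \sum_(i < N) size (S (lo + i%:Z)%R).

Local Open Scope ring_scope.

(* Y_lambda = sum_{r >= 0} SS_{lambda - r} 2^{-r+1-b}; the terms with
   lambda - r < lo vanish, and lambda <= lo + N - 1, so r < N suffices. *)
Definition Ysum (S : int -> seq nat) (b N : nat) (lam : int) : rat :=
  \sum_(r < N) (SS S (lam - r%:Z))%:R * (2%:R : rat) ^ (1 - r%:Z - b%:Z).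

Definition Hr (S : int -> seq nat) (b : nat) (lam : int) (r : nat) : nat :=
  (SS S (lam - r%:Z) %/ 2 ^ b)%N.

Definition Esum (S : int -> seq nat) (b : nat) (lam : int) : int :=
  \sum_(r < b.+1) Num.floor ((Hr S b lam r)%:R * (2%:R : rat) ^ (1 - r%:Z)).

(* Main.v *)
Require Import Defs.
From mathcomp Require Import all_boot all_order all_algebra.
From mathcomp Require Import zify ring lra.
Import Order.TTheory GRing.Theory Num.Theory.
Local Open Scope ring_scope.

Local Notation t := (2%:R : rat).

Lemma t_neq0 : t != 0. Proof. by []. Qed.
Lemma t_gt0 (z : int) : 0 < t ^ z. Proof. by apply: exprz_gt0. Qed.

Lemma tnat (n : nat) : ((2 ^ n)%N%:R : rat) = t ^ (n%:Z).
Proof. by rewrite natrX. Qed.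

Lemma tD (a c : int) : t ^ (a + c) = t ^ a * t ^ c.
Proof. by rewrite expfzDr. Qed.

Lemma geo_eq (k : int) (m M : nat) :
  \sum_(r < M) (if (m <= r)%N then t ^ (k - r%:Z) else 0) =
  if (M <= m)%N then 0 else t ^ (k + 1 - m%:Z) - t ^ (k + 1 - M%:Z).
Proof.
elim: M => [|M IH]; first by rewrite big_ord0.
rewrite big_ord_recr /= IH.
case: (ltngtP M m) => H.
- by rewrite addr0.
- have -> : k + 1 - M%:Z = (k - M%:Z) + 1 by ring.
  have -> : k + 1 - M.+1%:Z = k - M%:Z by rewrite -addn1 PoszD; ring.
  rewrite (tD (k - M%:Z) 1) expr1z; ring.
- rewrite -H.
  have -> : k + 1 - M.+1%:Z = k - M%:Z by rewrite -addn1 PoszD; ring.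
  have -> : k + 1 - M%:Z = (k - M%:Z) + 1 by ring.
  rewrite (tD (k - M%:Z) 1) expr1z; ring.
Qed.

Lemma geo (k : int) (m M : nat) :
  \sum_(r < M) (if (m <= r)%N then t ^ (k - r%:Z) else 0) <= t ^ (k + 1 - m%:Z).
Proof.
rewrite geo_eq; case: ifP => _; first by apply: ltW; apply: t_gt0.
by rewrite lerBlDr lerDl ltW // t_gt0.
Qed.

Lemma ind_sum (B M : nat) :
  \sum_(r < M) (if (r < B)%N then 1 else 0 : rat) = (minn M B)%:R.
Proof.
elim: M => [|M IH]; first by rewrite big_ord0 min0n.
rewrite big_ord_recr /= IH.
case: (ltnP M B) => H.
- by rewrite (minn_idPl H) -natr1.
- by rewrite (minn_idPr (leqW H)) addr0.
Qed.

Lemma sumn_le (s : seq nat) (K : nat) :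
  (forall x, x \in s -> (x < K)%N) -> (sumn s <= size s * K)%N.
Proof.
elim: s => [|x s IH] //= H.
have Hx : (x < K)%N by apply: H; rewrite inE eqxx.
have : (sumn s <= size s * K)%N.
  by apply: IH => y Hy; apply: H; rewrite inE Hy orbT.
lia.
Qed.

Theorem mainTheorem8 (b : nat) (lo : int) (N : nat) (S : int -> seq nat)
  (lam : int) :
  (2 <= b)%N ->
  (forall l : int, ~ (lo <= l < lo + N%:Z) -> S l = [::]) ->
  (forall (l : int) (x : nat), x \in S l -> (2 ^ b.-1 <= x < 2 ^ b)%N) ->
  (zcount S lo N < 2 ^ b)%N ->
  (1 <= zcount S lo N)%N ->
  (lo <= lam < lo + N%:Z) -> S lam != [::] ->
  (forall l : int, lam < l -> S l = [::]) ->
  let Y := Ysum S b N lam in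
  let E := Esum S b lam in
  [/\ (E%:~R : rat) <= Y, Y < (E + b%:Z + 7)%:~R & 1 <= Y].
Proof.
move=> hb hout hnorm hz _ /andP[hlo hhi] hne _ Y E.
have hsize : forall l, (size (S l) < 2 ^ b)%N.
  move=> l; case: (boolP (lo <= l < lo + N%:Z)) => hl; last first.
    by rewrite hout ?expn_gt0 //; apply/negP.
  case/andP: hl => hl1 hl2.
  have hi : (`|l - lo| < N)%N.
    by rewrite -ltz_nat gez0_abs ?subr_ge0 // ltrBlDl.
  apply: leq_ltn_trans hz.
  rewrite /zcount (bigD1 (Ordinal hi)) //=.
  have e : (lo + (`|l - lo|%N)%:Z)%R = l.
    rewrite gez0_abs ?subr_ge0 //; ring.
  by apply: leq_trans (leq_addr _ _); rewrite e.
have hSS : forall l, (SS S l < 2 ^ b * 2 ^ b)%N.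
  move=> l; rewrite /SS.
  apply: (leq_ltn_trans (@sumn_le _ (2 ^ b) _)).
    by move=> x hx; case/andP: (hnorm l x hx).
  by rewrite ltn_mul2r expn_gt0 hsize.
set F := fun r : nat => (SS S (lam - r%:Z))%:R * t ^ (1 - r%:Z - b%:Z).
have YF : Y = \sum_(r < N) F r by [].
have Fz : forall r, (N <= r)%N -> F r = 0.
  move=> r hr; rewrite /F /SS hout ?mul0r //.
  move/andP=> [h _]; lia.
have F0 : forall r, 0 <= F r.
  by move=> r; apply: mulr_ge0; [apply: ler0n | apply: exprz_ge0].
set M := maxn N b.+1.
have YM : Y = \sum_(r < M) F r.
  rewrite YF (big_ord_widen M F (leq_maxl _ _)) big_mkcond.
  apply: eq_bigr => r _; case: ifP => // /negbT; rewrite -leqNgt => h.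
  by rewrite Fz.
set G := fun r : nat => if (r < b.+1)%N then
   ((Num.floor ((Hr S b lam r)%:R * t ^ (1 - r%:Z)))%:~R : rat) else 0.
have EM : (E%:~R : rat) = \sum_(r < M) G r.
  rewrite /E /Esum rmorph_sum.
  rewrite (big_ord_widen M (fun r : nat => ((Num.floor ((Hr S b lam r)%:R * t ^ (1 - r%:Z)))%:~R : rat)) (leq_maxr _ _)).
  by rewrite big_mkcond.
set c := fun r : nat => (if (r < b.+1)%N then 1 else 0 : rat)
  + (if (0 <= r)%N then t ^ (1 - r%:Z) else 0)
  + (if (b.+1 <= r)%N then t ^ ((b%:Z + 1) - r%:Z) else 0).
have hfg : forall r : nat, G r <= F r /\ F r - G r < c r.
  move=> r; rewrite /G /c /F /Hr; set s := SS S (lam - r%:Z).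
  have tb : ((2 ^ b)%N%:R : rat) = t ^ (b%:Z) by rewrite tnat.
  have hq : 0 < t ^ (1 - r%:Z - b%:Z) by apply: t_gt0.
  case: ltnP => hr.
  - have hs : (s%:R : rat) = (s %/ 2 ^ b)%:R * t ^ (b%:Z) + (s %% 2 ^ b)%:R.
      by rewrite {1}(divn_eq s (2 ^ b)) natrD natrM tb.
    have hp : t ^ (b%:Z) * t ^ (1 - r%:Z - b%:Z) = t ^ (1 - r%:Z).
      by rewrite -tD; congr (_ ^ _); ring.
    have hL : ((s %% 2 ^ b)%:R : rat) < t ^ (b%:Z).
      by rewrite -tb ltr_nat ltn_pmod // expn_gt0.
    have hL' : ((s %% 2 ^ b)%:R : rat) * t ^ (1 - r%:Z - b%:Z) < t ^ (1 - r%:Z).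
      by rewrite -hp ltr_pM2r.
    have hL0 : 0 <= ((s %% 2 ^ b)%:R : rat) * t ^ (1 - r%:Z - b%:Z).
      by apply: mulr_ge0; [apply: ler0n | apply: ltW].
    have hFe : (s%:R : rat) * t ^ (1 - r%:Z - b%:Z) =
       (s %/ 2 ^ b)%:R * t ^ (1 - r%:Z) + (s %% 2 ^ b)%:R * t ^ (1 - r%:Z - b%:Z).
      by rewrite hs mulrDl -mulrA hp.
    have hf1 := floor_le ((s %/ 2 ^ b)%:R * t ^ (1 - r%:Z) : rat).
    have hf2 := floorD1_gt ((s %/ 2 ^ b)%:R * t ^ (1 - r%:Z) : rat).
    have e1 : ((1:int)%:~R : rat) = 1 by [].
    rewrite intrD e1 in hf2.
    rewrite hFe addr0 leq0n.
    move: hf1 hf2 hL' hL0.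
    set u := (s %/ 2 ^ b)%:R * t ^ (1 - r%:Z).
    set fl := ((Num.floor u)%:~R : rat).
    set v := (s %% 2 ^ b)%:R * t ^ (1 - r%:Z - b%:Z).
    set p := t ^ (1 - r%:Z).
    move=> *; split; lra.
  - have hS : (s%:R : rat) < t ^ (b%:Z) * t ^ (b%:Z).
      by rewrite -tb -natrM ltr_nat; apply: hSS.
    have hp : t ^ (b%:Z) * t ^ (b%:Z) * t ^ (1 - r%:Z - b%:Z) = t ^ (b%:Z + 1 - r%:Z).
      by rewrite -!tD; congr (_ ^ _); ring.
    have hF : (s%:R : rat) * t ^ (1 - r%:Z - b%:Z) < t ^ (b%:Z + 1 - r%:Z).
      by rewrite -hp ltr_pM2r.
    have hF0 : 0 <= (s%:R : rat) * t ^ (1 - r%:Z - b%:Z).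
      by apply: mulr_ge0; [apply: ler0n | apply: ltW].
    have hp0 : 0 < t ^ (1 - r%:Z) by apply: t_gt0.
    rewrite leq0n.
    move: hF hF0 hp0.
    set v := (s%:R : rat) * t ^ (1 - r%:Z - b%:Z).
    move=> *; split; lra.
have hM0 : (0 < M)%N by apply: leq_trans (leq_maxr _ _).
have hN0 : (0 < N)%N by lia.
have Ypos : 1 <= Y.
  rewrite YF (bigD1 (Ordinal hN0)) //=.
  have hrest : 0 <= \sum_(i < N | i != Ordinal hN0) F i by apply: sumr_ge0.
  suff h1 : 1 <= F 0%N by lra.
  rewrite /F subr0.
  have hs : (2 ^ b.-1 <= SS S lam)%N.
    rewrite /SS; case E0 : (S lam) hne => [|x s'] // _ /=.
    have := hnorm lam x; rewrite E0 inE eqxx => /(_ isT) /andP[h _].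
    by apply: leq_trans h (leq_addr _ _).
  have hs' : t ^ ((b.-1)%:Z) <= (SS S lam)%:R by rewrite -tnat ler_nat.
  have hp : t ^ ((b.-1)%:Z) * t ^ (1 - 0%:Z - b%:Z) = 1.
    rewrite -tD; have -> : (b.-1)%:Z + (1 - 0%:Z - b%:Z) = 0 by lia.
    by rewrite expr0z.
  have h2 : t ^ ((b.-1)%:Z) * t ^ (1 - 0%:Z - b%:Z) <= (SS S lam)%:R * t ^ (1 - 0%:Z - b%:Z) by rewrite ler_pM2r ?t_gt0.
  by rewrite hp in h2.
split => //.
- rewrite EM YM; apply: ler_sum => r _; exact: (hfg r).1.
- have hlt : Y - E%:~R < \sum_(r < M) c r.
    rewrite EM YM -sumrB; apply: ltr_sum.
      by apply/hasP; exists (Ordinal hM0); rewrite ?mem_index_enum.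
    by move=> r _; exact: (hfg r).2.
  have hcs : \sum_(r < M) c r <= b%:R + 7.
    rewrite /c !big_split /= ind_sum.
    have g1 := geo 1 0 M.
    have g2 := geo (b%:Z + 1) b.+1 M.
    move: g1 g2 => /= g1 g2.
    have e2 : (1 + 1 - 0%:Z : int) = 2%:Z by [].
    have e3 : (b%:Z + 1 + 1 - b.+1%:Z : int) = 1 by lia.
    have e4 : t ^ 2%:Z = 4%:R by rewrite -tnat.
    rewrite e2 e4 in g1. rewrite e3 expr1z in g2.
    move: g1 g2.
    have hmin : ((minn M b.+1)%:R : rat) <= b.+1%:R by rewrite ler_nat geq_minr.
    rewrite -natr1 in hmin.
    move=> *; lra.
  rewrite intrD intrD.
  have -> : ((b%:Z)%:~R : rat) = b%:R by [].
  have -> : ((7:int)%:~R : rat) = 7 by [].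
  lra.
Qed.
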